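(* Let $n\ge2$, let $a=(a_1,\dots,a_n)$ and $b=(b_1,\dots,b_n)$ be real sequences, and let $t=(t_1,\dots,t_n)\in T_a\cap T_b$. Then $$\sum_{i=1}^n a_ib_i-\frac1n\sum_{i=1}^n a_i\sum_{i=1}^n b_i\ge K_n(t)\sum_{i=1}^n\Big(t_i-\frac1n\sum_{j=1}^n t_j\Big)a_i\cdot\sum_{i=1}^n\Big(t_i-\frac1n\sum_{j=1}^n t_j\Big)b_i,$$ where $K_n(t)=\left(\sum_{i=1}^n t_i^2-\frac1n\big(\sum_{i=1}^n t_i\big)^2\right)^{-1}$.
   Context: For a real sequence $(x_i)$, $\Delta x_i=x_{i+1}-x_i$. ''Increasing'' means strictly increasing. For a real sequence $a=(a_i)_{i=1}^n$, $T_a$ denotes the set of increasing real sequences $(t_i)_{i=1}^n$ such that $(\Delta a_i/\Delta t_i)_{i=1}^{n-1}$ is non-decreasing. *)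

(* Defs.v *)
From mathcomp Require Import all_boot all_order all_algebra.
Set Implicit Arguments. Unset Strict Implicit. Unset Printing Implicit Defensive.
Import Order.TTheory GRing.Theory Num.Theory.
Local Open Scope ring_scope.

(* Sequences (x_1,...,x_n) are represented 0-indexed as x : nat -> R,
   only the values x 0, ..., x (n-1) matter. *)

Definition Delta (R : ringType) (x : nat -> R) (i : nat) : R := x i.+1 - x i.

Definition increasing_seq (R : realFieldType) (n : nat) (t : nat -> R) : Prop :=
  forall i j : nat, (i < j)%N -> (j < n)%N -> t i < t j.

Definition T_set (R : realFieldType) (n : nat) (a : nat -> R) (t : nat -> R) : Prop :=
  increasing_seq n t /\
  forall i j : nat, (i <= j)%N -> (j.+1 < n)%N ->
    Delta a i / Delta t i <= Delta a j / Delta t j.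

Definition mean (R : realFieldType) (n : nat) (x : nat -> R) : R :=
  n%:R^-1 * \sum_(0 <= i < n) x i.

Definition K_n (R : realFieldType) (n : nat) (t : nat -> R) : R :=
  (\sum_(0 <= i < n) t i ^+ 2 - n%:R^-1 * (\sum_(0 <= i < n) t i) ^+ 2)^-1.

(* Main.v *)
Require Import Defs.
From mathcomp Require Import all_boot all_order all_algebra.
From mathcomp Require Import ring lra.
Import Order.TTheory GRing.Theory Num.Theory.
Local Open Scope ring_scope.

Lemma abel_id (R : realFieldType) (N : nat) (y b : nat -> R) :
  \sum_(0 <= i < N.+1) y i * b i =
  b 0%N * \sum_(0 <= i < N.+1) y i
  + \sum_(0 <= l < N) (b l.+1 - b l) * \sum_(l.+1 <= i < N.+1) y i.
Proof.
elim: N => [|N IH].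
  rewrite !big_nat1 big_geq // addr0 mulrC //.
rewrite big_nat_recr //= IH.
have E1 : \sum_(0 <= l < N.+1) (b l.+1 - b l) * \sum_(l.+1 <= i < N.+2) y i
   = \sum_(0 <= l < N) (b l.+1 - b l) * \sum_(l.+1 <= i < N.+1) y i
     + y N.+1 * \sum_(0 <= l < N) (b l.+1 - b l) + (b N.+1 - b N) * y N.+1.
  rewrite big_nat_recr //= big_nat1 mulr_sumr -big_split /=; congr (_ + _).
  rewrite big_nat [RHS]big_nat; apply: eq_bigr => l /andP[_ Hl].
  rewrite big_nat_recr /=; [ring | exact: ltnW].
rewrite E1 telescope_sumr // [in RHS]big_nat_recr //=. ring.
Qed.

Lemma tail_cheb (R : realFieldType) (N : nat) (f g : nat -> R) :
  (forall l, 0 <= \sum_(l <= k < N) f k) ->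
  (forall i j, (i <= j)%N -> (j < N)%N -> g i <= g j) ->
  g 0%N * \sum_(0 <= k < N) f k <= \sum_(0 <= k < N) g k * f k.
Proof.
elim: N f g => [|N IH] f g Ht Hg.
  by rewrite !big_geq // mulr0.
rewrite !big_nat_recl //.
have IH' := IH (fun k => f k.+1) (fun k => g k.+1).
have T0 : 0 <= \sum_(0 <= k < N) f k.+1.
  by have := Ht 1%N; rewrite big_add1.
have H1 : g 1%N * \sum_(0 <= k < N) f k.+1 <= \sum_(0 <= k < N) g k.+1 * f k.+1.
  apply: IH' => [l|i j ij jN].
    by have := Ht l.+1; rewrite big_add1.
  by apply: Hg.
case: N {IH IH'} Ht Hg T0 H1 => [|N] Ht Hg T0 H1.
  by rewrite !big_geq // !addr0.
have g01 : g 0%N <= g 1%N by apply: Hg.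
have : g 0%N * \sum_(0 <= k < N.+1) f k.+1 <= g 1%N * \sum_(0 <= k < N.+1) f k.+1.
  by apply: ler_wpM2r.
move: H1; set S := \sum_(0 <= k < N.+1) f k.+1; set S' := \sum_(0 <= k < N.+1) _.
move=> H1 H2; rewrite mulrDr; lra.
Qed.

Lemma exists_neg (R : realFieldType) (m k : nat) (F : nat -> R) :
  \sum_(m <= i < k) F i < 0 -> exists2 i, (m <= i < k)%N & F i < 0.
Proof.
move=> Hs; case: (boolP (has (fun i => F i < 0) (index_iota m k))).
  by move=> /hasP [i]; rewrite mem_index_iota => Hi Fi; exists i.
move=> /hasPn H; exfalso; move: Hs; apply/negP; rewrite -leNgt.
rewrite big_nat; apply: sumr_ge0 => i Hi; rewrite leNgt; apply: H.
by rewrite mem_index_iota.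
Qed.

Lemma exists_pos (R : realFieldType) (m k : nat) (F : nat -> R) :
  0 < \sum_(m <= i < k) F i -> exists2 i, (m <= i < k)%N & 0 < F i.
Proof.
move=> Hs; have [|i Hi Fi] := @exists_neg R m k (fun i => - F i).
  by rewrite sumrN oppr_lt0.
by exists i => //; rewrite -oppr_lt0.
Qed.

Lemma cheb (R : realFieldType) (N : nat) (f g : nat -> R) :
  \sum_(0 <= k < N) f k = 0 ->
  (forall i j, (i < j)%N -> (j < N)%N -> 0 < f i -> f j < 0 -> False) ->
  (forall i j, (i <= j)%N -> (j < N)%N -> g i <= g j) ->
  0 <= \sum_(0 <= k < N) g k * f k.
Proof.
move=> Hs Hp Hg.
have := @tail_cheb R N f g; rewrite Hs mulr0; apply => // l.
case: (boolP (has (fun i => f i < 0) (index_iota l N))).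
  move=> /hasP [k]; rewrite mem_index_iota => /andP[lk kN] fk.
  have lN : (l <= N)%N by apply: leq_trans lk (ltnW kN).
  have : \sum_(0 <= i < N) f i = \sum_(0 <= i < l) f i + \sum_(l <= i < N) f i.
    by rewrite (@big_cat_nat _ _ _ l).
  rewrite Hs => E.
  have : \sum_(0 <= i < l) f i <= 0.
    rewrite big_nat; apply: sumr_le0 => i /andP[_ il].
    rewrite leNgt; apply/negP => fi; apply: (Hp i k) => //.
    by apply: leq_trans il lk.
  lra.
move=> /hasPn H; rewrite big_nat; apply: sumr_ge0 => i Hi; rewrite leNgt; apply: H.
by rewrite mem_index_iota.
Qed.
From mathcomp Require Import zify.

Lemma core (R : realFieldType) (n : nat) (a b t y : nat -> R) (al : R) :
  (1 < n)%N -> increasing_seq n t ->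
  (forall i j : nat, (i <= j)%N -> (j.+1 < n)%N ->
    Delta a i / Delta t i <= Delta a j / Delta t j) ->
  (forall i j : nat, (i <= j)%N -> (j.+1 < n)%N ->
    Delta b i / Delta t i <= Delta b j / Delta t j) ->
  (forall i, y i.+1 - y i = (a i.+1 - a i) - al * (t i.+1 - t i)) ->
  \sum_(0 <= i < n) y i = 0 -> \sum_(0 <= i < n) y i * t i = 0 ->
  0 <= \sum_(0 <= i < n) y i * b i.
Proof.
case: n => [|[|m]] // _ tinc Ha Hb Hy Sy Syt.
have dt : forall l, (l < m.+1)%N -> 0 < t l.+1 - t l.
  by move=> l hl; rewrite subr_gt0; apply: tinc.
pose S l := \sum_(l.+1 <= i < m.+2) y i.
pose f l := (t l.+1 - t l) * S l.
pose g l := (b l.+1 - b l) / (t l.+1 - t l).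
rewrite abel_id Sy mulr0 add0r.
have -> : \sum_(0 <= l < m.+1) (b l.+1 - b l) * \sum_(l.+1 <= i < m.+2) y i
        = \sum_(0 <= l < m.+1) g l * f l.
  rewrite big_nat [RHS]big_nat; apply: eq_bigr => l /andP[_ hl].
  by rewrite /g /f mulrA divfK // gt_eqF // dt.
apply: cheb.
- by move: Syt; rewrite abel_id Sy mulr0 add0r.
- move=> i j ij jm; have dti : 0 < t i.+1 - t i by apply: dt; lia.
  have dtj : 0 < t j.+1 - t j by apply: dt; lia.
  rewrite /f pmulr_rgt0 // pmulr_rlt0 // => Si Sj.
  have E1 : \sum_(0 <= p < m.+2) y p = \sum_(0 <= p < i.+1) y p + S i.
    by rewrite /S (@big_cat_nat _ _ _ i.+1) //; lia.
  have E2 : S i = \sum_(i.+1 <= p < j.+1) y p + S j.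
    by rewrite /S (@big_cat_nat _ _ _ j.+1) //; lia.
  have [p /andP[_ hp] yp] : exists2 p, (0 <= p < i.+1)%N & y p < 0.
    by apply: exists_neg; move: E1; rewrite Sy; lra.
  have [q /andP[hq1 hq2] yq] : exists2 q, (i.+1 <= q < j.+1)%N & 0 < y q.
    by apply: exists_pos; lra.
  have [k /andP[hk1 hk2] yk] := @exists_neg _ _ _ _ Sj.
  have [u /andP[hu1 hu2] yu] : exists2 u, (p <= u < q)%N & 0 < y u.+1 - y u.
    by apply: exists_pos; rewrite telescope_sumr; [lra | lia].
  have [v /andP[hv1 hv2] yv] : exists2 v, (q <= v < k)%N & y v.+1 - y v < 0.
    by apply: exists_neg; rewrite telescope_sumr; [lra | lia].
  have du : 0 < Delta a u / Delta t u - al.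
    have -> : Delta a u / Delta t u - al = (y u.+1 - y u) / (t u.+1 - t u).
      rewrite Hy /Delta; field; rewrite gt_eqF // dt //; lia.
    by apply: divr_gt0 => //; apply: dt; lia.
  have dv : Delta a v / Delta t v - al < 0.
    have -> : Delta a v / Delta t v - al = (y v.+1 - y v) / (t v.+1 - t v).
      rewrite Hy /Delta; field; rewrite gt_eqF // dt //; lia.
    by rewrite pmulr_llt0 // invr_gt0 dt //; lia.
  have : Delta a u / Delta t u <= Delta a v / Delta t v by apply: Ha; lia.
  lra.
- move=> i j ij jm; exact: (Hb i j ij).
Qed.

Lemma cov_lin (R : realFieldType) (n : nat) (x y : nat -> R) (c : R) :
  \sum_(0 <= i < n) (x i - c) * y i = \sum_(0 <= i < n) x i * y i - c * \sum_(0 <= i < n) y i.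
Proof. by rewrite mulr_sumr -sumrB; apply: eq_bigr => i _; ring. Qed.

Lemma sum_center (R : realFieldType) (n : nat) (x : nat -> R) :
  (0 < n)%N -> \sum_(0 <= i < n) (x i - mean n x) = 0.
Proof.
move=> n0; rewrite sumrB sumr_const_nat subn0 /mean -[_ *+ n]mulr_natl mulrA mulfV ?mul1r ?subrr //.
by rewrite pnatr_eq0 -lt0n.
Qed.

Theorem corollary4p2 (R : realFieldType) (n : nat) (a b t : nat -> R) :
  (2 <= n)%N -> T_set n a t -> T_set n b t ->
  \sum_(0 <= i < n) a i * b i
    - n%:R^-1 * (\sum_(0 <= i < n) a i) * (\sum_(0 <= i < n) b i)
  >= K_n n t * (\sum_(0 <= i < n) (t i - mean n t) * a i)
             * (\sum_(0 <= i < n) (t i - mean n t) * b i).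
Proof.
move=> Hn [tinc Ha] [_ Hb].
have n0 : (0 < n)%N by apply: leq_trans Hn.
set mt := mean n t; set ma := mean n a.
set V := \sum_(0 <= i < n) (t i - mt) * t i.
set Cta := \sum_(0 <= i < n) (t i - mt) * a i.
set Ctb := \sum_(0 <= i < n) (t i - mt) * b i.
have KV : K_n n t = V^-1.
  rewrite /K_n /V cov_lin /mt /mean; congr (_ - _)^-1.
  by rewrite expr2 mulrA.
have Vsq : V = \sum_(0 <= i < n) (t i - mt) ^+ 2.
  have : V = \sum_(0 <= i < n) (t i - mt) ^+ 2 + mt * \sum_(0 <= i < n) (t i - mt).
    by rewrite mulr_sumr -big_split; apply: eq_bigr => i _ /=; ring.
  by rewrite sum_center // mulr0 addr0.
have Vpos : 0 < V.
  rewrite Vsq big_ltn // big_ltn //.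
  have t01 : t 0%N < t 1%N by apply: tinc.
  have : 0 <= \sum_(2 <= i < n) (t i - mt) ^+ 2.
    by apply: sumr_ge0 => i _; apply: sqr_ge0.
  have h1 : 0 < (t 1%N - t 0%N) * (t 1%N - t 0%N) by apply: mulr_gt0; rewrite subr_gt0.
  have h2 := sqr_ge0 ((t 0%N - mt) + (t 1%N - mt)).
  rewrite !expr2 in h2 *; nra.
have V0 : V != 0 by rewrite gt_eqF.
set al := Cta / V.
pose y i := (a i - ma) - al * (t i - mt).
have LHS : \sum_(0 <= i < n) a i * b i
    - n%:R^-1 * (\sum_(0 <= i < n) a i) * (\sum_(0 <= i < n) b i)
    = \sum_(0 <= i < n) (a i - ma) * b i.
  by rewrite cov_lin.
have Hyb : \sum_(0 <= i < n) y i * b i = \sum_(0 <= i < n) (a i - ma) * b i - al * Ctb.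
  by rewrite /Ctb mulr_sumr -sumrB; apply: eq_bigr => i _; rewrite /y; ring.
suff Hpos : 0 <= \sum_(0 <= i < n) y i * b i.
  rewrite LHS KV; move: Hpos; rewrite Hyb /al.
  have -> : V^-1 * Cta * Ctb = Cta / V * Ctb by rewrite [V^-1 * Cta]mulrC.
  lra.
have Sy : \sum_(0 <= i < n) y i = 0.
  rewrite /y sumrB -mulr_sumr !sum_center // mulr0 subr0 //.
have Syt : \sum_(0 <= i < n) y i * t i = 0.
  have -> : \sum_(0 <= i < n) y i * t i = \sum_(0 <= i < n) (a i - ma) * t i - al * V.
    by rewrite /V mulr_sumr -sumrB; apply: eq_bigr => i _; rewrite /y; ring.
  rewrite /al divfK // /Cta !cov_lin /ma /mt /mean.
  have -> : \sum_(0 <= i < n) a i * t i = \sum_(0 <= i < n) t i * a i.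
    by apply: eq_bigr => i _; rewrite mulrC.
  ring.
have Hd : forall i : nat, y i.+1 - y i = a i.+1 - a i - al * (t i.+1 - t i).
  move=> i; rewrite /y; ring.
exact: (@core R n a b t y al Hn tinc Ha Hb Hd Sy Syt).
Qed.
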